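(* For every fixed integer $m\ge 1$, \[\lim_{n\to\infty}\frac{sat(Q_n,Q_m)}{e(Q_n)}=0.\]
   Context: $Q_n$ is the $n$-dimensional hypercube: vertex set $\{0,1\}^n$, two vertices adjacent iff they differ in exactly one coordinate; $e(Q_n)=n2^{n-1}$ is its number of edges. A copy of a graph $F$ in a graph $G$ is a subgraph of $G$ isomorphic to $F$; $G$ is $F$-free if it contains no copy of $F$. A graph $G$ is $(Q_n,F)$-saturated if $G$ is a subgraph of $Q_n$ (on vertex set $\{0,1\}^n$), $G$ is $F$-free, and adding to $G$ any edge of $E(Q_n)\setminus E(G)$ creates a copy of $F$ (i.e. $G$ is a maximal $F$-free subgraph of $Q_n$). $sat(Q_n,F)$ is the minimum number of edges of a $(Q_n,F)$-saturated graph. *)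

(* Defs.v *)
From mathcomp Require Import all_boot.
Set Implicit Arguments. Unset Strict Implicit. Unset Printing Implicit Defensive.

Definition cube (n : nat) : finType := {ffun 'I_n -> bool}.

Definition cadj (n : nat) (u v : cube n) : bool :=
  #|[set i : 'I_n | u i != v i]| == 1.

Definition cube_edges (n : nat) : {set {set cube n}} :=
  [set e : {set cube n} | [exists u : cube n, exists v : cube n,
     cadj u v && (e == [set u; v])]].

Definition eQ (n : nat) : nat := n * 2 ^ n.-1.

Definition has_copy (m n : nat) (G : {set {set cube n}}) : bool :=
  [exists phi : {ffun cube m -> cube n},
     injectiveb phi &&
     [forall x : cube m, forall y : cube m,
        cadj x y ==> ([set phi x; phi y] \in G)]].

Definition saturated (m n : nat) (G : {set {set cube n}}) : bool :=
  [&& G \subset cube_edges n,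
      ~~ has_copy m G &
      [forall e in cube_edges n :\: G, has_copy m (e |: G)]].

(* Every saturated G has #|G| <= e(Q_n) edges, and saturated graphs exist
   (maximal Q_m-free subgraphs), so the default value is never the answer
   unless it is the true minimum. *)
Definition sat (n m : nat) : nat :=
  \big[minn/eQ n]_(G : {set {set cube n}} | saturated m G) #|G|.

(* Main.v *)
Require Import Defs.
From Stdlib Require Import Reals Lra Lia ZArith PeanoNat.
From HB Require Import structures.
From mathcomp Require Import all_boot zify.
Set Implicit Arguments. Unset Strict Implicit. Unset Printing Implicit Defensive.


Definition flip n (v : cube n) (d : 'I_n) : cube n :=
  [ffun i : 'I_n => if i == d then ~~ v i else v i].

Lemma flipE n (v : cube n) d i : flip v d i = if i == d then ~~ v i else v i.
Proof. by rewrite /flip ffunE. Qed.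

Lemma flipK n (v : cube n) d : flip (flip v d) d = v.
Proof. apply/ffunP => i; rewrite !flipE; case: eqP => // _; exact: negbK. Qed.

Lemma flip_neq n (v : cube n) d : flip v d != v.
Proof. apply/eqP => /ffunP /(_ d); rewrite flipE eqxx; by case: (v d). Qed.

Lemma flip_inj n (v : cube n) d d' : flip v d = flip v d' -> d = d'.
Proof. move=> /ffunP /(_ d); rewrite !flipE eqxx; case: eqP => [//|_]; by case: (v d). Qed.

Lemma cadj_flip n (v : cube n) d : cadj v (flip v d).
Proof.
rewrite /cadj; have -> : [set i : 'I_n | v i != flip v d i] = [set d].
  apply/setP => i; rewrite !inE flipE; by case: (i == d); case: (v i).
by rewrite cards1.
Qed.

Lemma cadjP n (u w : cube n) : cadj u w -> exists d, w = flip u d.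
Proof.
rewrite /cadj => /cards1P [d Hd]; exists d; apply/ffunP => i.
rewrite flipE; have := congr1 (fun S : {set 'I_n} => i \in S) Hd; rewrite !inE /=.
by case: (i == d); case: (u i); case: (w i).
Qed.

Lemma cadj_sym n (u w : cube n) : cadj u w -> cadj w u.
Proof. move/cadjP => [d ->]; have := cadj_flip (flip u d) d; by rewrite flipK. Qed.


Lemma flipC n (v : cube n) a b : flip (flip v a) b = flip (flip v b) a.
Proof. apply/ffunP => i; rewrite !flipE; by case: (i == a); case: (i == b). Qed.

Lemma flip_diff n (v : cube n) i j : i != j -> flip v i != flip v j.
Proof. move=> Hij; apply/eqP => /flip_inj /eqP; by rewrite (negbTE Hij). Qed.

Lemma cyc4 n (a b c dd : cube n) : a != c -> b != dd ->
  cadj a b -> cadj b c -> cadj c dd -> cadj dd a ->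
  forall j, c j = a j (+) b j (+) dd j.
Proof.
move=> Hac Hbd /cadjP [p Hb] /cadjP [u Hc] Hcd /cadj_sym /cadjP [q Hd].
have /cadjP [w Hc'] := cadj_sym Hcd.
subst b dd.
have Hpq : p != q by apply: contra Hbd => /eqP ->.
have Hup : u != p.
  apply: contra Hac => /eqP Hup; subst u; by rewrite Hc flipK.
have Hwq : w != q.
  apply: contra Hac => /eqP Hwq; subst w; by rewrite Hc' flipK.
have E := etrans (esym Hc) Hc'.
have Ep : flip (flip a p) u p = flip (flip a q) w p by rewrite E.
rewrite !flipE eqxx (negbTE Hpq) in Ep.
rewrite eq_sym (negbTE Hup) in Ep.
have Hw : w = p.
  move: Ep; case: eqP => [->//|_]; by case: (a p).
subst w.
have Eu : flip (flip a p) u u = flip (flip a q) p u by rewrite E.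
rewrite !flipE eqxx (negbTE Hup) in Eu.
have Hu : u = q.
  move: Eu; case: eqP => [->//|_]; by case: (a u).
subst u => j; rewrite Hc !flipE.
by case: (j == p); case: (j == q); case: (a j).
Qed.

Lemma edge_cadj n (u w : cube n) : [set u; w] \in cube_edges n -> u != w -> cadj u w.
Proof.
rewrite /cube_edges inE => /existsP [u' /existsP [v' /andP [Hc /eqP E]]] Huw.
have Hu : u \in [set u'; v'] by rewrite -E !inE eqxx.
have Hw : w \in [set u'; v'] by rewrite -E !inE eqxx orbT.
move: Hu Hw Huw; rewrite !inE => /orP [] /eqP -> /orP [] /eqP ->; rewrite ?eqxx // => _.
exact: cadj_sym.
Qed.

Definition wt m (x : cube m) := #|[set i : 'I_m | x i]|.

Lemma wt_flip_lt m (x : cube m) j : x j -> wt (flip x j) < wt x.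
Proof.
move=> Hj; rewrite /wt; apply: proper_card; apply/properP; split.
  apply/subsetP => i; rewrite !inE flipE; by case: eqP => [->|].
exists j; rewrite !inE ?flipE ?eqxx ?Hj //.
Qed.

Lemma copy_struct m n (G : {set {set cube n}}) (phi : {ffun cube m -> cube n}) :
  G \subset cube_edges n -> injective phi ->
  (forall x y, cadj x y -> [set phi x; phi y] \in G) ->
  exists d : 'I_m -> 'I_n, injective d /\ forall x i, phi (flip x i) = flip (phi x) (d i).
Proof.
move=> HG Hinj Hedge.
have Hadj : forall x y, cadj x y -> cadj (phi x) (phi y).
  move=> x y Hxy; apply: edge_cadj; first exact: (subsetP HG _ (Hedge _ _ Hxy)).
  apply/eqP => /Hinj E; move: Hxy; rewrite E /cadj.
  have -> : [set i : 'I_m | y i != y i] = set0 by apply/setP => i; rewrite !inE eqxx.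
  by rewrite cards0.
pose z : cube m := [ffun _ => false].
have : forall i, exists di, phi (flip z i) = flip (phi z) di.
  move=> i; apply: cadjP; apply: Hadj; exact: cadj_flip.
case/fin_all_exists => d Hd.
have dinj : injective d.
  move=> i i' E; apply: (@flip_inj m z); apply: Hinj; by rewrite Hd E -Hd.
exists d; split => //.
have main : forall N x i, wt x < N -> x i = false -> phi (flip x i) = flip (phi x) (d i).
  elim=> // N IH x i HN Hxi.
  case: (pickP (fun j => x j)) => [j Hj|Hnone].
  - have Hji : j != i by apply: contraTneq Hj => ->; rewrite Hxi.
    pose y := flip x j.
    have Hyi : y i = false by rewrite /y flipE eq_sym (negbTE Hji).
    have IHy := IH y i (leq_trans (wt_flip_lt Hj) (HN)) Hyi.
    have Hxy : x = flip y j by rewrite /y flipK.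
    have Hc : flip x i = flip (flip y i) j by rewrite Hxy flipC.
    have Hac : phi y != phi (flip (flip y i) j).
      apply/eqP => /Hinj E; have := congr1 (fun f : cube m => f i) E.
      rewrite /= !flipE eqxx [i == j]eq_sym (negbTE Hji) ?Hxi //.
    have Hbd : phi (flip y i) != phi (flip y j).
      apply/eqP => /Hinj E; have := congr1 (fun f : cube m => f i) E.
      rewrite /= !flipE eqxx [i == j]eq_sym (negbTE Hji) ?Hxi //.
    have H3 : cadj (phi (flip (flip y i) j)) (phi (flip y j)).
      by rewrite flipC; apply: cadj_sym; apply: Hadj; exact: cadj_flip.
    have := cyc4 Hac Hbd (Hadj _ _ (cadj_flip _ _)) (Hadj _ _ (cadj_flip _ _))
       H3 (cadj_sym (Hadj _ _ (cadj_flip y j))).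
    rewrite -Hc -Hxy IHy => H; apply/ffunP => k; rewrite H !flipE.
    by case: (k == d i); case: (phi y k); case: (phi x k).
  - have -> : x = z by apply/ffunP => k; rewrite ffunE; apply/negbTE; rewrite Hnone.
    exact: Hd.
move=> x i; case Hxi: (x i).
- set y := flip x i.
  have Hyi : y i = false by rewrite /y flipE eqxx Hxi.
  have := main _ y i (ltnSn _) Hyi; rewrite /y flipK => ->; by rewrite flipK.
- exact: main _ x i (ltnSn _) Hxi.
Qed.


HB.instance Definition _ := Monoid.isComLaw.Build nat 0 Nat.lxor (fun a b c => esym (Nat.lxor_assoc a b c)) Nat.lxor_comm Nat.lxor_0_l.

Lemma expn2E r : 2 ^ r = Nat.pow 2 r.
Proof. elim: r => // r IH; by rewrite expnS IH mulnE. Qed.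

Lemma lxor_lt r a b : a < 2 ^ r -> b < 2 ^ r -> Nat.lxor a b < 2 ^ r.
Proof.
case: r => [|r].
  rewrite expn0 !ltnS !leqn0 => /eqP -> /eqP ->; by rewrite Nat.lxor_0_l.
rewrite expn2E => Ha Hb.
case: (Nat.eq_dec (Nat.lxor a b) 0) => [->|Hne]; first by apply: leq_ltn_trans Ha.
have lg : forall c, c < Nat.pow 2 r.+1 -> (Nat.log2 c < r.+1)%coq_nat.
  move=> c Hc; case: (Nat.eq_dec c 0) => [->|Hc0]; first by simpl; apply/ltP.
  apply Nat.log2_lt_pow2; [lia|by apply/ltP].
apply/ltP; apply Nat.log2_lt_pow2; first lia.
have := Nat.log2_lxor a b; have := lg _ Ha; have := lg _ Hb; lia.
Qed.

Definition vat n (v : cube n) (i : nat) : bool :=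
  if @insub nat (fun i => i < n) _ i is Some j then v (j : 'I_n) else false.

Lemma vat_ord n (v : cube n) (j : 'I_n) : vat v j = v j.
Proof.
rewrite /vat; case: insubP => [j' _ Hj|]; last by rewrite ltn_ord.
by have -> : j' = j by apply/val_inj.
Qed.

Lemma vat_out n (v : cube n) i : n <= i -> vat v i = false.
Proof. move=> H; rewrite /vat; case: insubP => // j'; by rewrite ltnNge H. Qed.

Lemma vat_flip n (v : cube n) (d : 'I_n) i :
  vat (flip v d) i = if i == d then ~~ vat v i else vat v i.
Proof.
case: (ltnP i n) => Hi; last first.
  rewrite !vat_out //; case: eqP => // E; move: Hi; by rewrite E leqNgt ltn_ord.
have -> : i = Ordinal Hi by [].
by rewrite !vat_ord flipE.
Qed.

Definition syn n r (v : cube n) (b : nat) : nat :=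
  \big[Nat.lxor/0]_(t < 2 ^ r | vat v (b * 2 ^ r + t)) (t : nat).

Lemma syn_lt n r (v : cube n) b : syn r v b < 2 ^ r.
Proof.
rewrite /syn; apply: (big_ind (fun x => x < 2 ^ r)).
- by rewrite expn_gt0.
- exact: lxor_lt.
- move=> t _; exact: ltn_ord.
Qed.

Lemma syn_ext n r (w w' : cube n) b :
  (forall t, t < 2 ^ r -> vat w (b * 2 ^ r + t) = vat w' (b * 2 ^ r + t)) ->
  syn r w b = syn r w' b.
Proof. move=> H; rewrite /syn; apply: eq_bigl => t; exact: H. Qed.

Lemma syn_toggle n r (w w' : cube n) b t0 : t0 < 2 ^ r ->
  vat w' (b * 2 ^ r + t0) = ~~ vat w (b * 2 ^ r + t0) ->
  (forall t, t < 2 ^ r -> t != t0 -> vat w' (b * 2 ^ r + t) = vat w (b * 2 ^ r + t)) ->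
  syn r w' b = Nat.lxor (syn r w b) t0.
Proof.
move=> Ht0 H0 H; rewrite /syn !(big_mkcond (fun t : 'I_(2^r) => vat _ _)).
rewrite (bigD1 (Ordinal Ht0)) //= [X in _ = Nat.lxor X _](bigD1 (Ordinal Ht0)) //=.
set R := \big[_/_]_(i | _) _; set R' := \big[_/_]_(i | _) _.
have -> : R = R'.
  apply: eq_bigr => t Ht; rewrite H //; apply: contra Ht => /eqP E.
rewrite H0; case: (vat w _) => /=.
- by rewrite Nat.lxor_0_l [Nat.lxor t0 R']Nat.lxor_comm Nat.lxor_assoc Nat.lxor_nilpotent Nat.lxor_0_r.
- by rewrite Nat.lxor_0_l Nat.lxor_comm.
Qed.

Lemma divmod_blk r b t : t < 2 ^ r -> (b * 2 ^ r + t) %/ 2 ^ r = b /\ (b * 2 ^ r + t) %% 2 ^ r = t.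
Proof.
move=> Ht; have k0 : 0 < 2 ^ r by rewrite expn_gt0.
by rewrite divnMDl // divn_small // addn0 modnMDl modn_small.
Qed.

Lemma syn_flip n r (v : cube n) (d : 'I_n) b :
  syn r (flip v d) b = if d %/ 2 ^ r == b then Nat.lxor (syn r v b) (d %% 2 ^ r) else syn r v b.
Proof.
have k0 : 0 < 2 ^ r by rewrite expn_gt0.
case: eqP => Hb.
- apply: syn_toggle; first by rewrite ltn_mod.
  + by rewrite vat_flip -Hb -divn_eq eqxx.
  + move=> t Ht Htt; rewrite vat_flip; case: eqP => // E.
    have := divmod_blk b Ht; rewrite E -Hb => [[_ E2]]; by rewrite E2 eqxx in Htt.
- apply: syn_ext => t Ht; rewrite vat_flip; case: eqP => // E.
  have := divmod_blk b Ht; rewrite E => [[E1 _]]; by rewrite E1 in Hb.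
Qed.

Definition btype M (b : nat) := M <= b.
Definition allnc n M r (tau : bool) (v : cube n) :=
  [forall b : 'I_(M + M), (btype M b == tau) ==> (syn r v b != 0)].
Definition hub n M r (tau : bool) (v : cube n) :=
  [exists b : 'I_(M + M), (btype M b == tau) && (syn r v b == 0)] && allnc M r (~~ tau) v.
Definition col n (s : nat) (v : cube n) (d : 'I_n) :=
  odd #|[set i : 'I_n | (s <= i) && (i != d) && v i]|.
Definition tpred n M r (v : cube n) (d : 'I_n) : bool :=
  if d < (M + M) * 2 ^ r then
    [&& d %% 2 ^ r != 0, (syn r v (d %/ 2 ^ r) == 0) || (syn r v (d %/ 2 ^ r) == d %% 2 ^ r)
      & allnc M r (~~ btype M (d %/ 2 ^ r)) v]
  else [exists tau : bool, hub M r tau v && (col ((M + M) * 2 ^ r) v d == tau)].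
Definition Tset n M r : {set {set cube n}} :=
  [set e | [exists v, exists d, tpred M r v d && (e == [set v; flip v d])]].

Lemma syn_flip_other n r (v : cube n) (d : 'I_n) b : d %/ 2 ^ r != b -> syn r (flip v d) b = syn r v b.
Proof. by rewrite syn_flip => /negbTE ->. Qed.

Lemma big_dir M r n (dd : 'I_n) (b : 'I_(M + M)) :
  (M + M) * 2 ^ r <= dd -> dd %/ 2 ^ r != b.
Proof.
move=> H; apply/eqP => E; have k0 : 0 < 2 ^ r by rewrite expn_gt0.
have : dd < (M + M) * 2 ^ r.
  by rewrite -ltn_divLR // E ltn_ord.
by rewrite ltnNge H.
Qed.

Lemma allnc_flipB n M r tau (v : cube n) (d : 'I_n) : (M + M) * 2 ^ r <= d ->
  allnc M r tau (flip v d) = allnc M r tau v.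
Proof.
move=> H; apply: eq_forallb => b; rewrite syn_flip_other //.
exact: big_dir.
Qed.

Lemma hub_flipB n M r tau (v : cube n) (d : 'I_n) : (M + M) * 2 ^ r <= d ->
  hub M r tau (flip v d) = hub M r tau v.
Proof.
move=> H; rewrite /hub allnc_flipB //; congr (_ && _); apply: eq_existsb => b.
rewrite syn_flip_other //; exact: big_dir.
Qed.

Lemma col_flip n s (v : cube n) (d : 'I_n) : col s (flip v d) d = col s v d.
Proof.
rewrite /col; congr (odd _); apply: eq_card => i; rewrite !inE flipE.
by case: eqP => //= ->; rewrite ?eqxx ?andbF. Qed.

Lemma lxorC2 a t : (Nat.lxor a t == 0) = (a == t).
Proof.
apply/eqP/eqP => [/Nat.lxor_eq //|->]; exact: Nat.lxor_nilpotent.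
Qed.

Lemma lxorC3 a t : (Nat.lxor a t == t) = (a == 0).
Proof.
apply/eqP/eqP => [E|->]; last exact: Nat.lxor_0_l.
have := congr1 (fun x => Nat.lxor x t) E.
by rewrite Nat.lxor_assoc Nat.lxor_nilpotent Nat.lxor_0_r.
Qed.

Lemma tpred_flip n M r (v : cube n) d : tpred M r (flip v d) d = tpred M r v d.
Proof.
rewrite /tpred; case: ifP => Hd.
- rewrite syn_flip eqxx lxorC2 lxorC3 orbC; congr [&& _, _ & _].
  apply: eq_forallb => b; case Eb: (btype M b == _) => //=.
  rewrite syn_flip_other //; apply/eqP => E; move: Eb; rewrite -E; by case: (btype M _).
- apply: eq_existsb => tau; rewrite hub_flipB ?col_flip //; by rewrite leqNgt Hd.
Qed.

Lemma inT n M r (w : cube n) d : [set w; flip w d] \in Tset n M r -> tpred M r w d.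
Proof.
rewrite inE => /existsP [v /existsP [d' /andP [Hp /eqP E]]].
have Hw : w \in [set v; flip v d'] by rewrite -E !inE eqxx.
have Hfw : flip w d \in [set v; flip v d'] by rewrite -E !inE eqxx orbT.
move: Hw Hfw; rewrite !inE => /orP [] /eqP Ew; subst w => /orP [] /eqP.
- by move=> E2; have := flip_neq v d; rewrite E2 eqxx.
- by move/flip_inj => ->.
- rewrite -{2}(flipK v d') => /flip_inj ->; by rewrite tpred_flip.
- by move=> E2; have := flip_neq (flip v d') d; rewrite E2 eqxx.
Qed.

Lemma T_sub n M r : Tset n M r \subset cube_edges n.
Proof.
apply/subsetP => e; rewrite !inE => /existsP [v /existsP [d /andP [_ /eqP ->]]].
apply/existsP; exists v; apply/existsP; exists (flip v d); by rewrite cadj_flip eqxx.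
Qed.


Lemma col_flip_other n s (v : cube n) (d d' : 'I_n) : s <= d' -> d' != d ->
  col s (flip v d') d = ~~ col s v d.
Proof.
move=> Hs Hne; rewrite /col.
set S := [set i : 'I_n | _]; set S' := [set i : 'I_n | _].
rewrite (cardsD1 d' S) (cardsD1 d' S').
have -> : S :\ d' = S' :\ d'.
  apply/setP => i; rewrite !inE flipE; by case: eqP.
rewrite !inE flipE eqxx Hs Hne /=; by case: (v d') => /=; rewrite ?negbK.
Qed.

Lemma hub_uniq n M r (v : cube n) tau tau' : hub M r tau v -> hub M r tau' v -> tau = tau'.
Proof.
case: (eqVneq tau tau') => // Hne.
have -> : tau' = ~~ tau by move: Hne; case: tau; case: tau'.
move=> /andP [_ /forallP H1] /andP [/existsP [b /andP [Hb Hs]] _].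
by have := H1 b; rewrite Hb Hs.
Qed.

Lemma phi_closed m n (phi : {ffun cube m -> cube n}) (d : 'I_m -> 'I_n) :
  injective d -> (forall x i, phi (flip x i) = flip (phi x) (d i)) ->
  forall x c, vat (phi x) c = vat (phi [ffun _ => false]) c (+) [exists i, x i && (d i == c :> nat)].
Proof.
move=> dinj Hd.
have main : forall N x, wt x < N -> forall c,
    vat (phi x) c = vat (phi [ffun _ => false]) c (+) [exists i, x i && (d i == c :> nat)].
  elim=> // N IH x HN c.
  case: (pickP (fun j => x j)) => [j Hj|Hnone].
  - have Hx : x = flip (flip x j) j by rewrite flipK.
    rewrite Hx Hd vat_flip IH; last exact: leq_trans (wt_flip_lt Hj) HN.
    have Hyj : flip x j j = false by rewrite flipE eqxx Hj.
    case: eqP => [Ec|Nc].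
    + have -> : [exists i, flip (flip x j) j i && (d i == c :> nat)] = true.
        by apply/existsP; exists j; rewrite flipK Hj Ec eqxx.
      have -> : [exists i, flip x j i && (d i == c :> nat)] = false.
        apply/negbTE/existsP => [[i /andP [Hi /eqP Ei]]].
        have Eij : i = j by apply: dinj; apply: ord_inj; by rewrite Ei Ec.
        by rewrite Eij Hyj in Hi.
      by rewrite addbF addbT.
    + congr (_ (+) _); apply: eq_existsb => i; rewrite flipK flipE.
      case: eqP => // ->; rewrite Hj; case: eqP => // E; by elim: Nc.
  - have -> : x = [ffun _ => false] by apply/ffunP => k; rewrite ffunE; apply/negbTE; rewrite Hnone.
    have -> : [exists i, [ffun _ => false] i && (d i == c :> nat)] = false.
      by apply/negbTE/existsP => [[i]]; rewrite ffunE.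
    by rewrite addbF.
move=> x; exact: main (ltnSn _).
Qed.


Lemma tpredA n M r (v : cube n) (dd : 'I_n) : dd < (M + M) * 2 ^ r -> tpred M r v dd ->
  [/\ dd %% 2 ^ r != 0, (syn r v (dd %/ 2 ^ r) == 0) || (syn r v (dd %/ 2 ^ r) == dd %% 2 ^ r)
    & allnc M r (~~ btype M (dd %/ 2 ^ r)) v].
Proof. by rewrite /tpred => -> /and3P. Qed.

Lemma tpredB n M r (v : cube n) (dd : 'I_n) : ~~ (dd < (M + M) * 2 ^ r) -> tpred M r v dd ->
  exists tau, hub M r tau v /\ col ((M + M) * 2 ^ r) v dd = tau.
Proof. rewrite /tpred => /negbTE -> /existsP [tau /andP [H1 /eqP H2]]; by exists tau. Qed.

Lemma blk_lt M r dd : dd < (M + M) * 2 ^ r -> dd %/ 2 ^ r < M + M.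
Proof. move=> H; by rewrite ltn_divLR // expn_gt0. Qed.

Lemma blk_eq M b b' : b < M + M -> b' < M + M -> (M <= b) = (M <= b') -> b %% M = b' %% M -> b = b'.
Proof.
move=> Hb Hb' Ht; case: (leqP M b) Ht => H1 H2.
- rewrite -(subnKC H1) -(subnKC (esym H2 : M <= b')) !modnDl !modn_small; lia.
- rewrite !modn_small //; last by move: H2; case: leqP.
Qed.


Theorem T_free n M r : ~~ has_copy M.+1 (Tset n M r).
Proof.
apply/negP => /existsP [phi /andP [/injectiveP Hinj /forallP Hall]].
have Hedge : forall x y, cadj x y -> [set phi x; phi y] \in Tset n M r.
  move=> x y Hxy; have := forallP (Hall x) y; by rewrite Hxy.
have [d [dinj Hd]] := copy_struct (T_sub n M r) Hinj Hedge.
have E : forall x i, tpred M r (phi x) (d i).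
  move=> x i; apply: inT; rewrite -Hd; apply: Hedge; exact: cadj_flip.
have k0 : 0 < 2 ^ r by rewrite expn_gt0.
pose z : cube M.+1 := [ffun _ => false].
pose p := phi z.
have E0 : forall i, tpred M r p (d i) := E z.
have E1 : forall i j, tpred M r (flip p (d j)) (d i).
  move=> i j; rewrite /p -Hd; exact: E.
have B1 : forall i j, i != j -> ~~ (d i < (M + M) * 2 ^ r) -> ~~ (d j < (M + M) * 2 ^ r) -> False.
  move=> i j Hij Hi Hj.
  have [tau [H1 H2]] := tpredB Hi (E0 i).
  have [tau' [H3 H4]] := tpredB Hi (E1 i j).
  have Hj' : (M + M) * 2 ^ r <= d j by rewrite leqNgt.
  rewrite hub_flipB // in H3.
  rewrite col_flip_other // in H4; last by apply: contra Hij => /eqP /dinj ->.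
  have := hub_uniq H1 H3; move: H2 H4 => <- <-; by case: (col _ _ _).
have A1 : forall i j, i != j -> d i < (M + M) * 2 ^ r -> d j < (M + M) * 2 ^ r ->
    d i %/ 2 ^ r != d j %/ 2 ^ r.
  move=> i j Hij Hi Hj; apply/eqP => Eb.
  have [Hti Hsi _] := tpredA Hi (E0 i).
  have [Htj Hsj _] := tpredA Hj (E0 j).
  have [_ Hsij _] := tpredA Hi (E1 i j).
  have Htt : d i %% 2 ^ r != d j %% 2 ^ r.
    apply: contra Hij => /eqP Et; apply/eqP; apply: dinj; apply: ord_inj.
    by rewrite (divn_eq (d i) (2 ^ r)) (divn_eq (d j) (2 ^ r)) Eb Et.
  rewrite syn_flip Eb eqxx in Hsij; rewrite Eb in Hsi.
  have Hs0 : syn r p (d j %/ 2 ^ r) = 0.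
    move: Hsi Hsj; case/orP => /eqP -> //; case/orP => /eqP.
      by move=> E'; rewrite E' eqxx in Hti.
    by move=> E'; rewrite E' eqxx in Htt.
  move: Hsij; rewrite Hs0 Nat.lxor_0_l (negbTE Htj) /= eq_sym.
  by rewrite (negbTE Htt).
have A2 : forall i j, d i < (M + M) * 2 ^ r -> d j < (M + M) * 2 ^ r ->
    btype M (d i %/ 2 ^ r) = btype M (d j %/ 2 ^ r).
  move=> i j Hi Hj; case: (boolP (btype M (d i %/ 2 ^ r) == btype M (d j %/ 2 ^ r))) => [/eqP //|Hne].
  exfalso.
  pose bj : 'I_(M + M) := Ordinal (blk_lt Hj).
  have [_ _ Hai] := tpredA Hi (E0 i).
  have [_ Hsj _] := tpredA Hj (E0 j).
  have [_ _ Haij] := tpredA Hi (E1 i j).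
  have Hty : btype M bj == ~~ btype M (d i %/ 2 ^ r).
    by move: Hne; rewrite /bj /=; case: (btype _ _); case: (btype _ _).
  have := forallP Hai bj; rewrite Hty /= => Hnz.
  have := forallP Haij bj; rewrite Hty /= syn_flip /= eqxx.
  move: Hsj; rewrite (negbTE Hnz) /= => /eqP ->; by rewrite Nat.lxor_nilpotent.
destruct M as [|M'].
  have Hn : ~~ (d ord0 < (0 + 0) * 2 ^ r) by rewrite mul0n.
  have [tau [/andP [/existsP [b _] _] _]] := tpredB Hn (E0 ord0).
  by case: b.
set M := M'.+1 in Hinj Hall Hedge d dinj Hd E z p E0 E1 B1 A1 A2 *.
pose IA := [set i : 'I_M.+1 | d i < (M + M) * 2 ^ r].
pose g (i : 'I_M.+1) : 'I_M := inord ((d i %/ 2 ^ r) %% M).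
have ginj : {in IA &, injective g}.
  move=> i j; rewrite !inE => Hi Hj Eg.
  have Em : (d i %/ 2 ^ r) %% M = (d j %/ 2 ^ r) %% M.
    have := congr1 val Eg; rewrite /g /= !inordK //; exact: ltn_mod.
  have Eb := blk_eq (blk_lt Hi) (blk_lt Hj) (A2 _ _ Hi Hj) Em.
  case: (eqVneq i j) => // Hij; by have := A1 _ _ Hij Hi Hj; rewrite Eb eqxx.
have cIA : #|IA| <= M.
  rewrite -(card_in_imset ginj); apply: leq_trans (max_card _) _; by rewrite card_ord.
have cIB : #|~: IA| <= 1.
  apply/card_le1_eqP => i j; rewrite !inE => Hi Hj.
  case: (eqVneq i j) => // Hij; exfalso; exact: B1 Hij Hi Hj.
have cT : #|IA| + #|~: IA| = M.+1 by rewrite cardsC card_ord.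
have cIA' : #|IA| = M by lia.
have cIB' : #|~: IA| = 1 by lia.
have gsurj : forall c : 'I_M, exists2 i, i \in IA & g i = c.
  move=> c; have : c \in g @: IA.
    have -> : g @: IA = [set: 'I_M]; last by rewrite inE.
    apply/eqP; by rewrite eqEcard subsetT cardsT card_ord card_in_imset // cIA' leqnn.
  case/imsetP => i Hi ->; exact: (ex_intro2 _ _ i Hi erefl).
have [j Hj] : exists j, ~: IA = [set j] by apply/cards1P; rewrite cIB'.
have [i0 Hi0] : exists i0, i0 \in IA.
  apply/card_gt0P; by rewrite cIA'.
have HjB : ~~ (d j < (M + M) * 2 ^ r).
  have : j \in ~: IA by rewrite Hj set11.
  by rewrite !inE.
move: Hi0; rewrite inE => Hi0.
pose tau := btype M (d i0 %/ 2 ^ r).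
pose x : cube M.+1 := [ffun i => (i \in IA) && (syn r p (d i %/ 2 ^ r) == 0)].
have Hcl := phi_closed dinj Hd x.
have Hexb : forall (b : 'I_(M + M)) t, t < 2 ^ r -> forall i', (d i' == b * 2 ^ r + t :> nat) ->
    [/\ d i' < (M + M) * 2 ^ r, d i' %/ 2 ^ r = b & d i' %% 2 ^ r = t].
  move=> b t Ht i' /eqP ->; have [-> ->] := divmod_blk b Ht; split => //.
  by rewrite -ltn_divLR // (divmod_blk b Ht).1.
have Claim : forall b : 'I_(M + M), syn r (phi x) b != 0.
  move=> b; case: (boolP (btype M b == tau)) => Hb.
  - have [i Hi Hgi] := gsurj (inord (b %% M)).
    move: Hi; rewrite inE => Hi.
    have Em : (d i %/ 2 ^ r) %% M = b %% M.
      have := congr1 val Hgi; rewrite /g /= !inordK //; exact: ltn_mod.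
    have Ebi : d i %/ 2 ^ r = b.
      apply: blk_eq (blk_lt Hi) (ltn_ord b) _ Em.
        by have := A2 _ _ Hi Hi0; rewrite /btype => ->; move: Hb; rewrite /tau /btype => /eqP ->.
    have Hex : forall t, t < 2 ^ r ->
        [exists i', x i' && (d i' == b * 2 ^ r + t :> nat)] = x i && (t == d i %% 2 ^ r).
      move=> t Ht; apply/existsP/andP.
      + case=> i' /andP [Hx' He]; have [Hi' Eb' Et'] := Hexb b t Ht i' He.
        case: (eqVneq i' i) => [Eii|Hne]; first by subst i'; rewrite Hx' Et' eqxx.
        by have := A1 _ _ Hne Hi' Hi; rewrite Eb' Ebi eqxx.
      + case=> Hx /eqP ->; exists i; rewrite Hx /=; apply/eqP.
        by rewrite {1}(divn_eq (d i) (2 ^ r)) Ebi.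
    have [Hti Hsi _] := tpredA Hi (E0 i); rewrite Ebi in Hsi.
    have Hmod : d i %% 2 ^ r < 2 ^ r by rewrite ltn_mod.
    case Hxi: (x i).
    + have Hs0 : syn r p b = 0.
        by move: Hxi; rewrite /x ffunE Ebi => /andP [_ /eqP].
      rewrite (@syn_toggle n r p (phi x) b (d i %% 2 ^ r)) //.
      * by rewrite Hs0 Nat.lxor_0_l.
      * by rewrite Hcl Hex // Hxi eqxx addbT.
      * move=> t Ht Hne; by rewrite Hcl Hex // Hxi (negbTE Hne) addbF.
    + rewrite (@syn_ext n r (phi x) p b).
      * move: Hxi; rewrite /x ffunE Ebi inE Hi /=; by move/negbT.
      * by move=> t Ht; rewrite Hcl Hex // Hxi addbF.
  - have Hex : forall t, t < 2 ^ r -> [exists i', x i' && (d i' == b * 2 ^ r + t :> nat)] = false.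
      move=> t Ht; apply/negbTE/existsP => [[i' /andP [_ He]]].
      have [Hi' Eb' _] := Hexb b t Ht i' He.
      by move: Hb; rewrite -Eb' (A2 _ _ Hi' Hi0) eqxx.
    rewrite (@syn_ext n r (phi x) p b); last by move=> t Ht; rewrite Hcl Hex // addbF.
    have [_ _ Ha] := tpredA Hi0 (E0 i0).
    have := forallP Ha b; rewrite -/tau.
    have -> : (btype M b == ~~ tau) = true by move: Hb; case: (btype M b); case: tau.
    done.
have [tau' [/andP [/existsP [b /andP [_ Hb0]] _] _]] := tpredB HjB (E x j).
by have := Claim b; rewrite Hb0.
Qed.


Definition good n M r (v : cube n) := [forall b : 'I_(M + M), syn r v b != 0].

Lemma negb_neq (b : bool) : ~~ b != b.
Proof. by case: b. Qed.

Definition betaf M (tau : bool) (i : nat) := if tau then M + i else i.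

Lemma betaf_lt M tau i : i < M -> betaf M tau i < M + M.
Proof. rewrite /betaf; case: tau; lia. Qed.

Lemma btype_betaf M tau i : i < M -> btype M (betaf M tau i) = tau.
Proof. rewrite /btype /betaf; case: tau => H; apply/idP/idP; lia. Qed.

Lemma sat_copy n M r (v : cube n) (d : 'I_n) :
  (M + M) * 2 ^ r <= d -> good M r v ->
  has_copy M.+1 ([set v; flip v d] |: Tset n M r).
Proof.
move=> Hd Hg.
have k0 : 0 < 2 ^ r by rewrite expn_gt0.
pose s := (M + M) * 2 ^ r.
pose tau := col s v d.
pose dirn (i : 'I_M.+1) : nat :=
  if i < M then betaf M tau i * 2 ^ r + syn r v (betaf M tau i) else d.
have dirn_lt : forall i : 'I_M.+1, i < M -> dirn i < s.
  move=> i Hi; rewrite /dirn Hi.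
  have := betaf_lt tau Hi; have := syn_lt r v (betaf M tau i).
  rewrite /s; move: (betaf M tau i) (syn r v _) => b t Ht Hb.
  apply: (@leq_trans (b.+1 * 2 ^ r)); first by rewrite mulSn; lia.
  by rewrite leq_mul2r Hb orbT.
have dirn_n : forall i : 'I_M.+1, dirn i < n.
  move=> i; case: (ltnP i M) => Hi.
    apply: leq_trans (dirn_lt _ Hi) _; apply: leq_trans Hd _; exact: ltnW.
  rewrite /dirn; have -> : (i < M) = false by apply/negbTE; rewrite -leqNgt.
  exact: ltn_ord.
pose dir (i : 'I_M.+1) : 'I_n := Ordinal (dirn_n i).
have dirA : forall i : 'I_M.+1, i < M ->
    dirn i %/ 2 ^ r = betaf M tau i /\ dirn i %% 2 ^ r = syn r v (betaf M tau i).
  move=> i Hi; rewrite /dirn Hi; exact: divmod_blk (syn_lt _ _ _).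
have dirB : forall i : 'I_M.+1, ~~ (i < M) -> dirn i = d.
  by move=> i Hi; rewrite /dirn (negbTE Hi).
have notM : forall i j : 'I_M.+1, ~~ (i < M) -> ~~ (j < M) -> i = j.
  move=> i j Hi Hj; apply: ord_inj; have := ltn_ord i; have := ltn_ord j; lia.
have betaf_inj : forall i j : 'I_M.+1, betaf M tau i = betaf M tau j -> i = j.
  move=> i j; rewrite /betaf; case: ifP => _ E; apply: ord_inj; lia.
have dinj : injective dir.
  move=> i j /(congr1 val) /= E.
  case: (boolP (i < M)) => Hi; case: (boolP (j < M)) => Hj.
  - apply: betaf_inj; by rewrite -(dirA _ Hi).1 -(dirA _ Hj).1 E.
  - by have := dirn_lt _ Hi; rewrite E dirB // ltnNge Hd.
  - by have := dirn_lt _ Hj; rewrite -E dirB // ltnNge Hd.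
  - exact: notM.
pose phi := [ffun x : cube M.+1 =>
  ([ffun c : 'I_n => v c (+) [exists i, x i && (dir i == c)]] : cube n)].
have phiE : forall x c, vat (phi x) c = vat v c (+) [exists i, x i && (dirn i == c)].
  move=> x c; case: (ltnP c n) => Hc.
  - have -> : c = Ordinal Hc by [].
    by rewrite !vat_ord /phi !ffunE.
  - rewrite !vat_out //; symmetry; apply/negbTE/existsP => [[i /andP [_ /eqP E]]].
    by have := dirn_n i; rewrite E ltnNge Hc.
have phiflip : forall x i, phi (flip x i) = flip (phi x) (dir i).
  move=> x i; apply/ffunP => c; rewrite flipE /phi !ffunE.
  case: eqP => [->|Nc].
  - have -> : [exists i0, flip x i i0 && (dir i0 == dir i)] = ~~ x i.
      apply/existsP/idP => [[j /andP [Hj /eqP /dinj Ej]]|Hx].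
        by move: Hj; rewrite Ej flipE eqxx.
      by exists i; rewrite flipE eqxx Hx eqxx.
    have -> : [exists i0, x i0 && (dir i0 == dir i)] = x i.
      apply/existsP/idP => [[j /andP [Hj /eqP /dinj Ej]]|Hx]; first by rewrite -Ej.
      by exists i; rewrite Hx eqxx.
    by case: (v _); case: (x i).
  - congr (_ (+) _); apply: eq_existsb => j; rewrite flipE.
    case: (j =P i) => [->|//]; case: eqP => [E|]; [by elim: Nc | by rewrite !andbF].
have phiinj : injective phi.
  move=> x y E; apply/ffunP => i.
  have : phi x (dir i) = phi y (dir i) by rewrite E.
  rewrite /phi !ffunE.
  have H : forall w : cube M.+1, [exists i0, w i0 && (dir i0 == dir i)] = w i.
    move=> w; apply/existsP/idP => [[j /andP [Hj /eqP /dinj Ej]]|Hx]; first by rewrite -Ej.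
    by exists i; rewrite Hx eqxx.
  rewrite !H; by case: (v _); case: (x i); case: (y i).
have Hdb : forall (b : nat) t (i : 'I_M.+1), b < M + M -> t < 2 ^ r ->
    (dirn i == b * 2 ^ r + t) = [&& i < M, betaf M tau i == b & t == syn r v b].
  move=> b t i Hb Ht; apply/eqP/and3P.
  - move=> E; case: (boolP (i < M)) => Hi.
    + have [E1 E2] := dirA _ Hi; rewrite E (divmod_blk b Ht).1 in E1.
      rewrite E (divmod_blk b Ht).2 in E2.
      by rewrite E2 E1 !eqxx.
    + have : b * 2 ^ r + t < s.
        rewrite /s; apply: (@leq_trans (b.+1 * 2 ^ r)); first by rewrite mulSn; lia.
        by rewrite leq_mul2r Hb orbT.
      by rewrite -E dirB // ltnNge Hd.
  - case=> Hi /eqP Eb /eqP Et; rewrite /dirn Hi Eb Et //.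
have S_same : forall x (b : nat), b < M + M -> btype M b != tau -> syn r (phi x) b = syn r v b.
  move=> x b Hb Ht; apply: syn_ext => t Htk; rewrite phiE.
  have -> : [exists i, x i && (dirn i == b * 2 ^ r + t)] = false.
    apply/negbTE/existsP => [[i /andP [_]]]; rewrite Hdb // => /and3P [Hi /eqP Eb _].
    by move: Ht; rewrite -Eb btype_betaf // eqxx.
  by rewrite addbF.
have S_tau : forall x (i : 'I_M.+1), i < M ->
    syn r (phi x) (betaf M tau i) = if x i then 0 else syn r v (betaf M tau i).
  move=> x i Hi.
  have Hb := betaf_lt tau Hi.
  have Hex : forall t, t < 2 ^ r -> [exists j, x j && (dirn j == betaf M tau i * 2 ^ r + t)]
      = x i && (t == syn r v (betaf M tau i)).
    move=> t Ht; apply/existsP/andP.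
    - case=> j /andP [Hj]; rewrite Hdb // => /and3P [_ /eqP Eb Et].
      by have Eji := betaf_inj _ _ Eb; rewrite Eji in Hj; rewrite Hj Et.
    - case=> Hx Et; exists i; by rewrite Hx Hdb // Hi eqxx Et.
  have Hst := syn_lt r v (betaf M tau i).
  case Hxi: (x i).
  - rewrite (@syn_toggle n r v (phi x) _ (syn r v (betaf M tau i))) //.
    + exact: Nat.lxor_nilpotent.
    + by rewrite phiE Hex // Hxi eqxx addbT.
    + by move=> t Ht Hne; rewrite phiE Hex // Hxi (negbTE Hne) addbF.
  - apply: syn_ext => t Ht; by rewrite phiE Hex // Hxi addbF.
have Hmem : forall x i, [set phi x; flip (phi x) (dir i)] \in [set v; flip v d] |: Tset n M r.
  move=> x i; rewrite in_setU1.
  case: (boolP (i < M)) => Hi.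
  - apply/orP; right; rewrite inE; apply/existsP; exists (phi x); apply/existsP; exists (dir i).
    rewrite eqxx andbT /tpred /= (dirn_lt _ Hi) (dirA _ Hi).1 (dirA _ Hi).2.
    have Hb := betaf_lt tau Hi.
    apply/and3P; split.
    + exact: (forallP Hg (Ordinal Hb)).
    + by rewrite S_tau //; case: (x i); rewrite eqxx ?orbT.
    + apply/forallP => b; apply/implyP; rewrite btype_betaf // => Hbt.
      rewrite S_same //; first exact: (forallP Hg b).
      by rewrite (eqP Hbt) negb_neq.
  - have Edi : dir i = d by apply: ord_inj; rewrite /= dirB.
    rewrite Edi.
    case: (boolP [exists j : 'I_M.+1, (j < M) && x j]) => [/existsP [j /andP [Hj Hxj]]|Hno].
    + apply/orP; right; rewrite inE; apply/existsP; exists (phi x); apply/existsP; exists d.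
      rewrite eqxx andbT /tpred ltnNge Hd /=.
      apply/existsP; exists tau; apply/andP; split.
      * apply/andP; split.
        -- apply/existsP; exists (Ordinal (betaf_lt tau Hj)).
           by rewrite /= btype_betaf // eqxx S_tau // Hxj.
        -- apply/forallP => b; apply/implyP => Hbt.
           rewrite S_same //; first exact: (forallP Hg b).
           by rewrite (eqP Hbt) negb_neq.
      * rewrite /tau /col; apply/eqP; congr (odd _); apply: eq_card => c; rewrite !inE.
        case: (boolP (s <= c)) => //= Hc; case: (boolP (c != d)) => //= Hcd.
        rewrite /phi !ffunE.
        have -> : [exists j0, x j0 && (dir j0 == c)] = false.
          apply/negbTE/existsP => [[j0 /andP [_ /eqP Ej]]].
          case: (boolP (j0 < M)) => Hj0.
          ++ by have := dirn_lt _ Hj0; rewrite -[dirn j0]/(val (dir j0)) Ej ltnNge Hc.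
          ++ by move: Hcd; rewrite -Ej; apply/negP; rewrite negbK; apply/eqP; apply: ord_inj; rewrite /= dirB.
        by rewrite addbF.
    + have Hphi : phi x = if x i then flip v d else v.
        apply/ffunP => c; rewrite /phi !ffunE.
        have -> : [exists j, x j && (dir j == c)] = x i && (d == c).
          apply/existsP/andP.
          -- case=> j /andP [Hxj /eqP Ej].
             case: (boolP (j < M)) => Hj.
               by move: Hno => /existsP; case; exists j; rewrite Hj Hxj.
             have Eij := notM _ _ Hj Hi; subst j; by rewrite Hxj -Ej Edi eqxx.
          -- case=> Hxi /eqP Ec; exists i; by rewrite Hxi Edi Ec eqxx.
        case: (x i); rewrite ?flipE /=; last by rewrite addbF.
        by rewrite eq_sym; case: eqP => _; rewrite ?addbT ?addbF.
      apply/orP; left; rewrite Hphi; case: (x i); last by [].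
      by rewrite flipK setUC.
apply/existsP; exists phi; apply/andP; split; first by apply/injectiveP.
apply/forallP => x; apply/forallP => y; apply/implyP => /cadjP [i ->].
by rewrite phiflip Hmem.
Qed.


Lemma has_copy_mono m n (G G' : {set {set cube n}}) : G \subset G' -> has_copy m G -> has_copy m G'.
Proof.
move=> HG /existsP [phi /andP [Hi /forallP H]]; apply/existsP; exists phi; rewrite Hi /=.
apply/forallP => x; apply/forallP => y; apply/implyP => Hxy.
have := forallP (H x) y; rewrite Hxy /= => Hin; exact: subsetP HG _ Hin.
Qed.

Lemma bigmin_le (I : finType) (P : pred I) (F : I -> nat) x i0 :
  P i0 -> \big[minn/x]_(i | P i) F i <= F i0.
Proof.
move=> H.
have gen : forall l : seq I, i0 \in l -> \big[minn/x]_(i <- l | P i) F i <= F i0.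
  elim=> // a l IH; rewrite inE big_cons => /orP [/eqP <-|Hl]; first by rewrite H geq_minl.
  case: ifP => _; last exact: IH.
  exact: leq_trans (geq_minr _ _) (IH Hl).
apply: gen; exact: mem_index_enum.
Qed.

Lemma exists_sat n M r : exists G, saturated M.+1 G /\ Tset n M r \subset G.
Proof.
pose P (G : {set {set cube n}}) := [&& Tset n M r \subset G, G \subset cube_edges n & ~~ has_copy M.+1 G].
have PT : P (Tset n M r) by rewrite /P subxx T_sub T_free.
case: (@arg_maxnP _ _ P (fun G : {set {set cube n}} => #|G|) PT) => G /and3P [HT HE HF] Hmax.
exists G; split => //; rewrite /saturated HE HF /=.
apply/forallP => e; apply/implyP; rewrite in_setD => /andP [HeG He].
case: (boolP (has_copy M.+1 (e |: G))) => // Hc.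
have : P (e |: G).
  rewrite /P Hc andbT; apply/andP; split.
    apply: subset_trans HT _; exact: subsetUr.
  by apply/subsetP => f; rewrite in_setU1 => /orP [/eqP ->|]; [exact: He|apply: (subsetP HE)].
move/Hmax; rewrite /geq cardsU1 HeG add1n; lia.
Qed.

Lemma card_cube n : #|cube n| = 2 ^ n.
Proof. by rewrite card_ffun card_bool card_ord. Qed.

Lemma card_lt_ord n s : #|[set d : 'I_n | d < s]| <= s.+1.
Proof.
pose g (d : 'I_n) : 'I_s.+1 := inord d.
have ginj : {in [set d : 'I_n | d < s] &, injective g}.
  move=> a b; rewrite !inE => Ha Hb E; apply: ord_inj.
  have := congr1 (@nat_of_ord _) E; rewrite /g !inordK //; exact: ltnW.
rewrite -(card_in_imset ginj); apply: leq_trans (max_card _) _; by rewrite card_ord.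
Qed.

Lemma card_code n r b : (b.+1) * 2 ^ r <= n ->
  #|[set v : cube n | syn r v b == 0]| * 2 ^ r <= 2 ^ n.
Proof.
move=> Hb.
have Ho : forall t : 'I_(2 ^ r), b * 2 ^ r + t < n.
  move=> t; apply: leq_trans Hb; rewrite mulSn addnC ltn_add2r; exact: ltn_ord.
pose f (vt : cube n * 'I_(2 ^ r)) : cube n := flip vt.1 (Ordinal (Ho vt.2)).
have Hsyn : forall v (t : 'I_(2 ^ r)), syn r (f (v, t)) b = Nat.lxor (syn r v b) t.
  move=> v t; rewrite /f /= syn_flip /= (divmod_blk b (ltn_ord t)).1 eqxx.
  by rewrite (divmod_blk b (ltn_ord t)).2.
pose C := [set v : cube n | syn r v b == 0].
have finj : {in setX C [set: 'I_(2 ^ r)] &, injective f}.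
  move=> [v t] [v' t']; rewrite !inE /= !andbT => /eqP Hv /eqP Hv' E.
  have Et : t = t'.
    apply: ord_inj; have := congr1 (fun w => syn r w b) E; rewrite /= !Hsyn Hv Hv'.
    by rewrite !Nat.lxor_0_l.
  subst t'; congr (_, _); have := congr1 (fun w => flip w (Ordinal (Ho t))) E.
  by rewrite /f /= !flipK.
have := card_in_imset finj; rewrite cardsX cardsT card_ord => <-.
rewrite -(card_cube n); exact: max_card.
Qed.

Lemma card_bad n M r : (M + M) * 2 ^ r <= n ->
  #|[set v : cube n | ~~ good M r v]| * 2 ^ r <= (M + M) * 2 ^ n.
Proof.
move=> Hs.
pose C (b : 'I_(M + M)) := [set v : cube n | syn r v b == 0].
have Hsub : [set v : cube n | ~~ good M r v] \subset \bigcup_(b < M + M) C b.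
  apply/subsetP => v; rewrite inE => /forallPn [b]; rewrite negbK => Hb.
  apply/bigcupP; exists b => //; by rewrite inE.
have Hcup : #|\bigcup_(b < M + M) C b| <= \sum_(b < M + M) #|C b|.
  apply: (@big_rec2 _ _ (fun (U : {set cube n}) (x : nat) => #|U| <= x)).
  - by rewrite cards0.
  - move=> b U x _ H; apply: leq_trans (leq_card_setU _ _) _; by rewrite leq_add2l.
apply: leq_trans (leq_mul (leq_trans (subset_leq_card Hsub) Hcup) (leqnn _)) _.
rewrite big_distrl /=.
have Hc : forall b : 'I_(M + M), #|C b| * 2 ^ r <= 2 ^ n.
  move=> b; apply: card_code; apply: leq_trans Hs; by rewrite leq_mul2r ltn_ord orbT.
apply: (@leq_trans (\sum_(b < M + M) 2 ^ n)); first by apply: leq_sum => b _; exact: Hc.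
by rewrite sum_nat_const card_ord.
Qed.

Lemma sat_bound n M r : (M + M) * 2 ^ r <= n ->
  sat n M.+1 * 2 ^ r <= 2 ^ n * ((M + M) * 2 ^ r).+1 * 2 ^ r + (M + M) * 2 ^ n * n.
Proof.
move=> Hs.
have [G [HG HT]] := exists_sat n M r.
have Hle : sat n M.+1 <= #|G| by apply: bigmin_le.
move: HG => /and3P [HE HF _].
pose s := (M + M) * 2 ^ r.
pose S := [set vd : cube n * 'I_n | (vd.2 < s) || ~~ good M r vd.1].
pose f (vd : cube n * 'I_n) := [set vd.1; flip vd.1 vd.2].
have Gsub : G \subset f @: S.
  apply/subsetP => e He.
  have := subsetP HE _ He; rewrite inE => /existsP [u /existsP [w /andP [Hc /eqP Ee]]].
  have [d Hw] := cadjP Hc; subst w.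
  apply/imsetP; exists (u, d); last by rewrite Ee.
  rewrite inE /=; apply/negPn/negP; rewrite negb_or negbK -leqNgt => /andP [Hd Hg].
  move: HF => /negP; apply; apply: (has_copy_mono _ (sat_copy Hd Hg)).
  apply/subsetP => f0; rewrite in_setU1 => /orP [/eqP ->|]; first by rewrite -Ee.
  exact: (subsetP HT).
have cG : #|G| <= #|S| := leq_trans (subset_leq_card Gsub) (leq_imset_card _ _).
have cS : #|S| <= 2 ^ n * s.+1 + #|[set v : cube n | ~~ good M r v]| * n.
  have -> : S = setX [set: cube n] [set d : 'I_n | d < s] :|: setX [set v : cube n | ~~ good M r v] [set: 'I_n].
    apply/setP => [[v d]]; by rewrite !inE /= andbT orbC.
  apply: leq_trans (leq_card_setU _ _) _; rewrite !cardsX cardsT card_cube cardsT card_ord.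
  by rewrite leq_add2r leq_mul2l card_lt_ord orbT.
have cB := card_bad Hs.
have := leq_mul (leq_trans Hle (leq_trans cG cS)) (leqnn (2 ^ r)).
move/leq_trans; apply.
rewrite mulnDl leq_add2l -mulnAC; apply: leq_mul (cB) (leqnn n).
Qed.

Open Scope R_scope.

Lemma nat_unbounded (A : R) : exists N : nat, A < INR N.
Proof.
have [H1 _] := archimed A.
case: (Z_le_gt_dec 0 (up A)) => Hz.
- exists (Z.to_nat (up A)); rewrite INR_IZR_INZ Z2Nat.id //; lra.
- exists 0%N; simpl; have : IZR (up A) < 0 by apply: IZR_lt; lia.
  lra.
Qed.

Lemma INR_muln a b : INR (a * b)%N = INR a * INR b.
Proof. by rewrite mulnE mult_INR. Qed.
Lemma INR_addn a b : INR (a + b)%N = INR a + INR b.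
Proof. by rewrite addnE plus_INR. Qed.
Lemma INR_expn2 a : INR (2 ^ a)%N = 2 ^ a.
Proof. by rewrite expn2E pow_INR. Qed.
Lemma INR_succ a : INR a.+1 = INR a + 1.
Proof. exact: S_INR. Qed.
Lemma INR_leq a b : (a <= b)%N -> INR a <= INR b.
Proof. move/leP; exact: le_INR. Qed.

Theorem theorem1 (m : nat) (hm : (1 <= m)%coq_nat) :
  Un_cv (fun n : nat => INR (sat n m) / INR (eQ n)) 0.
Proof.
move=> eps Heps.
have [M HM] : exists M, m = M.+1 by exists m.-1; rewrite prednK //; apply/leP.
subst m.
have [r Hr] := nat_unbounded (4 * INR (M + M)%N / eps).
have Hrk : INR r <= 2 ^ r.
  rewrite -INR_expn2; apply: INR_leq; apply: ltnW; exact: ltn_expl.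
have [N0 HN0] := nat_unbounded (4 * (INR ((M + M) * 2 ^ r)%N + 1) / eps).
exists (maxn N0 (maxn ((M + M) * 2 ^ r) 1)).
move=> n /leP Hn.
have Hsn : ((M + M) * 2 ^ r <= n)%N by move: Hn; rewrite !geq_max => /and3P [].
have HN0n : (N0 <= n)%N by move: Hn; rewrite !geq_max => /and3P [].
have Hn1 : (1 <= n)%N by move: Hn; rewrite !geq_max => /and3P [].
have Hb := INR_leq (sat_bound Hsn).
destruct n as [|n']; first by [].
rewrite /eQ /= in Hb *.
rewrite !INR_addn !INR_muln INR_succ !INR_muln !INR_expn2 in Hb.
rewrite INR_muln INR_expn2 in HN0.
rewrite INR_muln INR_expn2.
have HA : 0 < 2 ^ n' by apply: pow_lt; lra.
have Hk : 0 < 2 ^ r by apply: pow_lt; lra.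
have HnS : INR N0 <= INR n'.+1 by apply: INR_leq.
set x := INR (sat n'.+1 M.+1) in Hb *.
set A := 2 ^ n' in Hb HA *.
set kk := 2 ^ r in Hb Hk Hrk HN0 *.
set nn := INR n'.+1 in Hb HnS *.
set s := INR (M + M)%N * kk in Hb HN0.
have HMM : 0 <= INR (M + M)%N by apply: pos_INR.
have Hx : 0 <= x by apply: pos_INR.
have Hnn : 0 < nn by rewrite /nn; apply: lt_0_INR; apply/ltP.
have E2 : 2 ^ S n' = 2 * A by [].
rewrite E2 in Hb.
have H1 : INR (M + M)%N * 4 < eps * kk.
  have : 4 * INR (M + M)%N / eps < kk by lra.
  move=> H; have := Rmult_lt_compat_r eps _ _ Heps H.
  by rewrite /Rdiv Rmult_assoc Rinv_l ?Rmult_1_r; lra.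
have H2 : (s + 1) * 4 < eps * nn.
  have : 4 * (s + 1) / eps < nn by lra.
  move=> H; have := Rmult_lt_compat_r eps _ _ Heps H.
  by rewrite /Rdiv Rmult_assoc Rinv_l ?Rmult_1_r; lra.
have Hxk : x * kk < eps * (nn * A) * kk.
  apply: (Rle_lt_trans _ _ _ Hb).
  have P1 := Rmult_lt_compat_r (A * kk) _ _ (Rmult_lt_0_compat _ _ HA Hk) H2.
  have P2 := Rmult_lt_compat_r (A * nn) _ _ (Rmult_lt_0_compat _ _ HA Hnn) H1.
  lra.
have Hlt : x < eps * (nn * A).
  apply: (Rmult_lt_reg_r kk) => //.
rewrite /Rdist Rminus_0_r Rabs_pos_eq.
- apply: (Rmult_lt_reg_r (nn * A)); first nra.
  rewrite /Rdiv Rmult_assoc Rinv_l ?Rmult_1_r //; nra.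
- apply: Rmult_le_pos => //; apply: Rlt_le; apply: Rinv_0_lt_compat; nra.
Qed.
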